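(* Let $w$ be a Chebyshev weight, $n,\nu\in\mathbb N$, and let $Q$ be a trigonometric polynomial of degree at most $\nu$ that is even or odd. Let $t_k^n=t_k^n(w)$, $k=1,\dots,n$, be as in the context, set $t_0^n:=0$ and $\Delta t_k^n:=t_k^n-t_{k-1}^n$. Then $$\sum_{k=1}^n|Q(t_k^n)|\,\Delta t_k^n\le\Big(1+\frac{2\pi\nu}{n_w}\Big)\int_0^\pi|Q(\tau)|\,d\tau.$$
   Context: Chebyshev weights: $w_1(x)=(1-x^2)^{-1/2}$, $w_2(x)=(1-x^2)^{1/2}$, $w_3(x)=\sqrt{(1+x)/(1-x)}$, $w_4(x)=\sqrt{(1-x)/(1+x)}$. Angles: $t_k^n=\frac{(2k-1)\pi}{2n}$ ($w=w_1$), $\frac{k\pi}{n+1}$ ($w=w_2$), $\frac{(2k-1)\pi}{2n+1}$ ($w=w_3$), $\frac{2k\pi}{2n+1}$ ($w=w_4$), $k=1,\dots,n$. $n_w=n$ if $w=w_1$, $n_w=n+1$ if $w=w_2$, $n_w=\frac{2n+1}{2}$ if $w\in\{w_3,w_4\}$. *)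

(* Defs.v *)
From Stdlib Require Import Reals Lra.
From Coquelicot Require Import Coquelicot.
Open Scope R_scope.

Inductive cheb_weight : Type := W1 | W2 | W3 | W4.

Definition cheb_weight_fun (w : cheb_weight) (x : R) : R :=
  match w with
  | W1 => / sqrt (1 - x ^ 2)
  | W2 => sqrt (1 - x ^ 2)
  | W3 => sqrt ((1 + x) / (1 - x))
  | W4 => sqrt ((1 - x) / (1 + x))
  end.

Definition cheb_angle (w : cheb_weight) (n k : nat) : R :=
  match k with
  | O => 0
  | S _ =>
    match w with
    | W1 => (2 * INR k - 1) * PI / (2 * INR n)
    | W2 => INR k * PI / (INR n + 1)
    | W3 => (2 * INR k - 1) * PI / (2 * INR n + 1)
    | W4 => 2 * INR k * PI / (2 * INR n + 1)
    end
  end.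

Definition cheb_dangle (w : cheb_weight) (n k : nat) : R :=
  cheb_angle w n k - cheb_angle w n (k - 1).

Definition cheb_nw (w : cheb_weight) (n : nat) : R :=
  match w with
  | W1 => INR n
  | W2 => INR n + 1
  | W3 | W4 => (2 * INR n + 1) / 2
  end.

Definition trig_poly_eval (a b : nat -> R) (nu : nat) (t : R) : R :=
  a O + sum_n_m (fun j => a j * cos (INR j * t) + b j * sin (INR j * t)) 1 nu.

Definition is_trig_poly_deg_le (nu : nat) (Q : R -> R) : Prop :=
  exists a b : nat -> R, forall t, Q t = trig_poly_eval a b nu t.

Definition is_even_fun (Q : R -> R) : Prop := forall t, Q (- t) = Q t.
Definition is_odd_fun (Q : R -> R) : Prop := forall t, Q (- t) = - Q t.

(* Main.v *)
Require Import Defs.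
From Stdlib Require Import Reals Lra Lia.
From Coquelicot Require Import Coquelicot.
Open Scope R_scope.

Fixpoint fsum (f : nat -> R) (n : nat) : R :=
  match n with O => 0 | S m => fsum f m + f m end.

Lemma fsum_ext f g n : (forall i, (i < n)%nat -> f i = g i) -> fsum f n = fsum g n.
Proof. induction n; simpl; intros H; auto. rewrite IHn by (intros; apply H; lia). rewrite H by lia. auto. Qed.

Lemma fsum_plus f g n : fsum (fun i => f i + g i) n = fsum f n + fsum g n.
Proof. induction n; simpl; [lra|]. rewrite IHn; lra. Qed.

Lemma fsum_scal c f n : fsum (fun i => c * f i) n = c * fsum f n.
Proof. induction n; simpl; [lra|]. rewrite IHn; lra. Qed.

Lemma fsum_zero n : fsum (fun _ => 0) n = 0.
Proof. induction n; simpl; [lra|]. rewrite IHn; lra. Qed.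

Lemma fsum_swap (F : nat -> nat -> R) n m :
  fsum (fun i => fsum (fun j => F i j) m) n = fsum (fun j => fsum (fun i => F i j) n) m.
Proof.
  induction n; simpl. rewrite fsum_zero; auto.
  rewrite IHn. rewrite <- fsum_plus. auto.
Qed.

Lemma fsum_le f g n : (forall i, (i < n)%nat -> f i <= g i) -> fsum f n <= fsum g n.
Proof. induction n; simpl; intros H; [lra|]. assert (H1 := H n (Nat.lt_succ_diag_r n)).
  assert (fsum f n <= fsum g n) by (apply IHn; intros; apply H; lia). lra. Qed.

Lemma fsum_abs f n : Rabs (fsum f n) <= fsum (fun i => Rabs (f i)) n.
Proof. induction n; simpl. rewrite Rabs_R0; lra.
  eapply Rle_trans; [apply Rabs_triang|]. lra. Qed.

Lemma fsum_nonneg f n : (forall i, (i < n)%nat -> 0 <= f i) -> 0 <= fsum f n.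
Proof. intros H. rewrite <- (fsum_zero n). apply fsum_le. auto. Qed.

Lemma sum_n_m_fsum (f : nat -> R) n :
  sum_n_m f 1 n = fsum (fun i => f (S i)) n.
Proof.
  induction n. simpl. rewrite sum_n_m_zero by lia. reflexivity.
  rewrite sum_n_Sm by lia. rewrite IHn. simpl. reflexivity.
Qed.

Lemma continuous_fsum (h : nat -> R -> R) n x :
  (forall k, continuous (h k) x) -> continuous (fun y => fsum (fun k => h k y) n) x.
Proof.
  intros H; induction n; simpl. apply continuous_const.
  apply (continuous_plus (fun y => fsum (fun k => h k y) n) (h n)); auto.
Qed.

Lemma ex_RInt_cont (f : R -> R) a b : (forall x, continuous f x) -> ex_RInt f a b.
Proof. intros; apply (@ex_RInt_continuous R_CompleteNormedModule); auto. Qed.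

Lemma RInt_fsum (h : nat -> R -> R) n a b :
  (forall k x, continuous (h k) x) ->
  RInt (fun y => fsum (fun k => h k y) n) a b = fsum (fun k => RInt (h k) a b) n.
Proof.
  intros H; induction n; simpl.
  rewrite RInt_const. unfold scal; simpl; unfold mult; simpl. ring.
  rewrite <- IHn.
  apply (RInt_plus (fun y => fsum (fun k => h k y) n) (h n)).
  apply ex_RInt_cont. intros; apply continuous_fsum; auto.
  apply ex_RInt_cont; auto.
Qed.

Definition tp (a b : nat -> R) nu t :=
  a O + fsum (fun i => a (S i) * cos (INR (S i) * t) + b (S i) * sin (INR (S i) * t)) nu.

Definition tpd (a b : nat -> R) nu t :=
  fsum (fun i => INR (S i) * (b (S i) * cos (INR (S i) * t) - a (S i) * sin (INR (S i) * t))) nu.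

Lemma trig_tp a b nu t : trig_poly_eval a b nu t = tp a b nu t.
Proof. unfold trig_poly_eval, tp. rewrite sum_n_m_fsum. auto. Qed.

Lemma tp_derive a b nu t : is_derive (tp a b nu) t (tpd a b nu t).
Proof.
  unfold tp, tpd. induction nu; simpl.
  - apply (is_derive_ext (fun _ => a O)). intros; simpl; ring.
    auto_derive; auto.
  - apply (is_derive_ext (fun t => (a O + fsum (fun i => a (S i) * cos (INR (S i) * t) + b (S i) * sin (INR (S i) * t)) nu) +
       (a (S nu) * cos (INR (S nu) * t) + b (S nu) * sin (INR (S nu) * t)))).
    intros; simpl; ring.
    apply (is_derive_plus (fun t => (a O + fsum (fun i => a (S i) * cos (INR (S i) * t) + b (S i) * sin (INR (S i) * t)) nu))
      (fun t => (a (S nu) * cos (INR (S nu) * t) + b (S nu) * sin (INR (S nu) * t)))); auto.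
    auto_derive; auto. simpl. ring.
Qed.

Definition da (a b : nat -> R) i := match i with O => 0 | S _ => INR i * b i end.
Definition db (a b : nat -> R) i := match i with O => 0 | S _ => - INR i * a i end.

Lemma tpd_tp a b nu t : tpd a b nu t = tp (da a b) (db a b) nu t.
Proof. unfold tpd, tp; simpl. rewrite Rplus_0_l. apply fsum_ext; intros; simpl. ring. Qed.

Lemma tp_cont a b nu t : continuous (tp a b nu) t.
Proof. apply (ex_derive_continuous (K:=R_AbsRing) (V:=R_NormedModule)). eexists; apply tp_derive. Qed.

Lemma tpd_cont a b nu t : continuous (tpd a b nu) t.
Proof. apply (ex_derive_continuous (K:=R_AbsRing) (V:=R_NormedModule)). eexists. apply (is_derive_ext (tp (da a b) (db a b) nu)).
  intros; rewrite tpd_tp; auto. apply tp_derive. Qed.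

Lemma tp_period a b nu t : tp a b nu (t + 2 * PI) = tp a b nu t.
Proof.
  unfold tp. f_equal. apply fsum_ext; intros.
  replace (INR (S i) * (t + 2 * PI)) with (INR (S i) * t + 2 * INR (S i) * PI) by ring.
  rewrite cos_period, sin_period. auto.
Qed.

Lemma sin_npi j : sin (INR j * PI) = 0.
Proof. induction j. simpl. rewrite Rmult_0_l; apply sin_0.
  rewrite S_INR. replace ((INR j + 1) * PI) with (INR j * PI + PI) by ring. rewrite neg_sin, IHj; ring. Qed.

Lemma sin_halfpi k : sin ((INR k + /2) * PI) = (-1)^k.
Proof. induction k. simpl. replace ((0 + /2) * PI) with (PI/2) by field. apply sin_PI2.
  rewrite S_INR. replace ((INR k + 1 + /2) * PI) with ((INR k + /2) * PI + PI) by ring. rewrite neg_sin, IHk. simpl; ring. Qed.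

Lemma telescope (g : nat -> R) m :
  fsum (fun k => (-1)^k * (g (S k) + g k)) m = g O - (-1)^m * g m.
Proof. induction m; simpl. ring. rewrite IHm. ring. Qed.

Lemma trig1 A B : sin (A + B) + sin (A - B) = 2 * sin A * cos B.
Proof. rewrite sin_plus, sin_minus. ring. Qed.

Lemma trig_B j h : sin h <> 0 ->
  cos h / sin h * (cos (INR (S j) * (2*h)) - cos (INR j * (2*h))) =
  - (sin (INR (S j) * (2*h)) + sin (INR j * (2*h))).
Proof.
  intros Hs. rewrite S_INR.
  replace ((INR j + 1) * (2*h)) with ((2*INR j+1)*h + h) by ring.
  replace (INR j * (2*h)) with ((2*INR j+1)*h - h) by ring.
  rewrite cos_plus, cos_minus, sin_plus, sin_minus. field. auto.
Qed.

Lemma trig_A j h : sin h <> 0 ->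
  (sin (INR (S (S j)) * (2*h)) - sin (INR j * (2*h))) / (sin h)^2 =
  4 * (cos (INR (S j) * (2*h)) * (cos h / sin h)).
Proof.
  intros Hs. rewrite !S_INR.
  replace ((INR j + 1 + 1) * (2*h)) with ((INR j + 1)*(2*h) + 2*h) by ring.
  replace (INR j * (2*h)) with ((INR j+1)*(2*h) - 2*h) by ring.
  rewrite sin_plus, sin_minus, sin_2a. field. auto.
Qed.

Lemma trig_A1 h : sin h <> 0 -> sin (INR 1 * (2*h)) / (sin h)^2 = 2 * (cos (INR 0 * (2*h)) * (cos h / sin h)).
Proof. intros Hs. simpl. replace (1 * (2*h)) with (2*h) by ring. replace (0 * (2*h)) with 0 by ring.
  rewrite sin_2a, cos_0. field. auto. Qed.



Section Riesz.
Variable N : nat.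
Hypothesis HN : (1 <= N)%nat.

Definition xk k := (INR k + /2) * (PI / INR N).
Definition hk k := xk k / 2.

Lemma INRN_pos : 0 < INR N.
Proof. apply lt_0_INR; lia. Qed.

Lemma hk_range k : (k < N)%nat -> 0 < hk k < PI / 2.
Proof.
  intros Hk. unfold hk, xk. assert (H1 := INRN_pos). assert (H2 := PI_RGT_0).
  assert (INR k + 1 <= INR N) by (rewrite <- S_INR; apply le_INR; lia).
  assert (0 <= INR k) by apply pos_INR.
  split. apply Rmult_lt_0_compat; [|lra]. apply Rmult_lt_0_compat; [lra|]. apply Rdiv_lt_0_compat; lra.
  apply Rmult_lt_reg_r with (2 * INR N / PI). apply Rdiv_lt_0_compat; lra.
  field_simplify; try lra.
Qed.

Lemma sk_pos k : (k < N)%nat -> 0 < sin (hk k).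
Proof. intros Hk; destruct (hk_range k Hk). apply sin_gt_0; lra. Qed.

Lemma xk_eq k : xk k = 2 * hk k.
Proof. unfold hk; field. Qed.

Definition Cs j := fsum (fun k => (-1)^k * sin (INR j * xk k)) N.
Definition Bs j := fsum (fun k => (-1)^k * cos (INR j * xk k) * (cos (hk k) / sin (hk k))) N.
Definition As j := fsum (fun k => (-1)^k * sin (INR j * xk k) / (sin (hk k))^2) N.

Lemma Cs_zero j : (j < N)%nat -> Cs j = 0.
Proof.
  intros Hj. set (d := PI / INR N).
  assert (Hc : 0 < cos (INR j * d / 2)).
  { apply cos_gt_0. assert (0 <= INR j) by apply pos_INR. unfold d.
    assert (0 < PI / INR N) by (apply Rdiv_lt_0_compat; [apply PI_RGT_0|apply INRN_pos]). 
    assert (0 <= INR j * (PI / INR N)) by (apply Rmult_le_pos; lra). assert (H3 := PI_RGT_0). lra.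
    assert (INR j + 1 <= INR N) by (rewrite <- S_INR; apply le_INR; lia).
    assert (H1 := INRN_pos). assert (H2 := PI_RGT_0).
    apply Rmult_lt_reg_r with (2 * INR N / PI). apply Rdiv_lt_0_compat; lra.
    unfold d; field_simplify; lra. }
  assert (2 * cos (INR j * d / 2) * Cs j = 0).
  { unfold Cs. rewrite <- fsum_scal.
    rewrite (fsum_ext _ (fun k => (-1)^k * ((fun k => sin (INR j * INR k * d)) (S k) + (fun k => sin (INR j * INR k * d)) k))).
    rewrite (telescope (fun k => sin (INR j * INR k * d))). simpl. replace (INR j * 0 * d) with 0 by ring. rewrite sin_0.
    unfold d. replace (INR j * INR N * (PI / INR N)) with (INR j * PI) by (field; assert (H1 := INRN_pos); lra).
    rewrite sin_npi; ring.
    intros i _. rewrite S_INR. unfold xk. fold d.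
    replace (INR j * (INR i + 1) * d) with (INR j * ((INR i + /2) * d) + INR j * d / 2) by field.
    replace (INR j * INR i * d) with (INR j * ((INR i + /2) * d) - INR j * d / 2) by field.
    rewrite trig1. ring. }
  apply Rmult_integral in H. destruct H; lra.
Qed.

Lemma Bs_step j : Bs (S j) = Bs j - (Cs (S j) + Cs j).
Proof.
  unfold Bs, Cs.
  replace (fsum (fun k => (-1)^k * cos (INR (S j) * xk k) * (cos (hk k) / sin (hk k))) N)
    with (fsum (fun k => (-1)^k * cos (INR j * xk k) * (cos (hk k) / sin (hk k)) +
                        (-1) * ((-1)^k * sin (INR (S j) * xk k) + (-1)^k * sin (INR j * xk k))) N).
  rewrite fsum_plus, fsum_scal, fsum_plus. ring.
  apply fsum_ext. intros k Hk. rewrite !xk_eq.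
  assert (Hs := sk_pos k Hk).
  assert (E := trig_B j (hk k) ltac:(lra)).
  transitivity ((-1)^k * (cos (INR j * (2 * hk k)) * (cos (hk k) / sin (hk k)) +
     cos (hk k) / sin (hk k) * (cos (INR (S j) * (2 * hk k)) - cos (INR j * (2 * hk k))))).
  rewrite E. ring. field. lra.
Qed.

Lemma Bs_const j : (j < N)%nat -> Bs j = Bs 0.
Proof.
  induction j; intros Hj; auto. rewrite Bs_step, IHj by lia. rewrite !Cs_zero by lia. ring.
Qed.

Lemma As_0 : As 0 = 0.
Proof. unfold As. rewrite <- (fsum_zero N). apply fsum_ext. intros. simpl. rewrite Rmult_0_l, sin_0. unfold Rdiv; ring. Qed.

Lemma As_1 : As 1 = 2 * Bs 0.
Proof. unfold As, Bs. rewrite <- fsum_scal. apply fsum_ext. intros k Hk.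
  assert (Hs := sk_pos k Hk). rewrite xk_eq.
  assert (E := trig_A1 (hk k) ltac:(lra)).
  unfold Rdiv in *. rewrite Rmult_assoc, E. ring. Qed.

Lemma As_step j : As (S (S j)) = As j + 4 * Bs (S j).
Proof. unfold As, Bs. rewrite <- fsum_scal, <- fsum_plus. apply fsum_ext. intros k Hk.
  assert (Hs := sk_pos k Hk). rewrite !xk_eq.
  assert (E := trig_A j (hk k) ltac:(lra)).
  transitivity ((-1)^k * sin (INR j * (2 * hk k)) / sin (hk k) ^ 2 +
    (-1)^k * ((sin (INR (S (S j)) * (2 * hk k)) - sin (INR j * (2 * hk k))) / sin (hk k) ^ 2)).
  field. lra. rewrite E. ring. Qed.

Lemma As_lin j : (j <= N)%nat -> As j = 2 * INR j * Bs 0.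
Proof.
  assert (forall j, (S j <= N)%nat -> As j = 2 * INR j * Bs 0 /\ As (S j) = 2 * INR (S j) * Bs 0).
  { clear j. intro j. induction j; intros Hj. split. rewrite As_0; simpl; ring. rewrite As_1; simpl; ring.
    destruct IHj as [H1 H2]. lia. split; auto. rewrite As_step, H1, (Bs_const (S j)) by lia. rewrite !S_INR. ring. }
  intros Hj. destruct j. rewrite As_0; simpl; ring. apply H; auto.
Qed.

Definition Ssum := fsum (fun k => / (sin (hk k))^2) N.

Lemma As_N : As N = Ssum.
Proof. unfold As, Ssum. apply fsum_ext. intros k Hk. unfold xk.
  replace (INR N * ((INR k + / 2) * (PI / INR N))) with ((INR k + /2) * PI)
    by (field; assert (H1 := INRN_pos); lra).
  rewrite sin_halfpi. assert (Hs := sk_pos k Hk).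
  replace ((-1)^k * (-1)^k) with 1. field. lra.
  rewrite <- pow_add. replace (k+k)%nat with (2*k)%nat by lia. rewrite pow_1_even. auto.
Qed.

Lemma fsum_pos f n : (1 <= n)%nat -> (forall i, (i < n)%nat -> 0 < f i) -> 0 < fsum f n.
Proof. induction n; intros Hn H. lia. simpl. destruct n. simpl. specialize (H O ltac:(lia)). lra.
  assert (0 < fsum f (S n)) by (apply IHn; [lia| intros; apply H; lia]). specialize (H (S n) ltac:(lia)). lra. Qed.

Lemma Ssum_pos : 0 < Ssum.
Proof. unfold Ssum. apply fsum_pos; auto. intros i Hi. assert (Hs := sk_pos i Hi). apply Rinv_0_lt_compat, pow_lt; lra. Qed.

Lemma Bs0_eq : Bs 0 = Ssum / (2 * INR N).
Proof. assert (H := As_lin N (Nat.le_refl N)). rewrite As_N in H. rewrite H. field. assert (H1 := INRN_pos); lra. Qed.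

Lemma Bs0_pos : 0 < Bs 0.
Proof. rewrite Bs0_eq. apply Rdiv_lt_0_compat. apply Ssum_pos. assert (H1 := INRN_pos); lra. Qed.

End Riesz.

Lemma RInt_shift (F : R -> R) c a b : (forall x, continuous F x) ->
  RInt (fun x => F (x + c)) a b = RInt F (a + c) (b + c).
Proof.
  intros H. replace (a + c) with (1 * a + c) by ring. replace (b + c) with (1 * b + c) by ring.
  rewrite <- (RInt_comp_lin F 1 c a b).
  apply RInt_ext. intros; unfold scal; simpl; unfold mult; simpl. rewrite Rmult_1_l, Rmult_1_l. auto.
  apply ex_RInt_cont; auto.
Qed.

Lemma RInt_period (F : R -> R) c : (forall x, continuous F x) -> (forall x, F (x + 2*PI) = F x) ->
  RInt F (- PI + c) (PI + c) = RInt F (- PI) PI.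
Proof.
  intros H Hp.
  assert (E1 : RInt F PI (PI + c) = RInt F (-PI) (-PI + c)).
  { replace PI with (-PI + 2*PI) at 1 by ring. replace (PI + c) with (-PI + c + 2*PI) by ring.
    rewrite <- RInt_shift by auto. apply RInt_ext. intros; auto. }
  rewrite <- (RInt_Chasles F (-PI + c) (-PI) (PI + c)) by (apply ex_RInt_cont; auto).
  rewrite <- (RInt_Chasles F (-PI) PI (PI + c)) by (apply ex_RInt_cont; auto).
  rewrite E1. rewrite <- (opp_RInt_swap F (-PI) (-PI + c)) by (apply ex_RInt_cont; auto).
  unfold plus, opp; simpl. ring.
Qed.

Lemma RInt_shift_period (F : R -> R) c : (forall x, continuous F x) -> (forall x, F (x + 2*PI) = F x) ->
  RInt (fun x => F (x + c)) (- PI) PI = RInt F (- PI) PI.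
Proof. intros; rewrite RInt_shift by auto. apply RInt_period; auto. Qed.

Lemma RInt_even (G : R -> R) : (forall x, continuous G x) -> (forall x, G (- x) = G x) ->
  RInt G (- PI) PI = 2 * RInt G 0 PI.
Proof.
  intros H He.
  rewrite <- (RInt_Chasles G (-PI) 0 PI) by (apply ex_RInt_cont; auto).
  assert (RInt G (-PI) 0 = RInt G 0 PI).
  { assert (E := RInt_comp_lin G (-1) 0 0 PI).
    replace (-1 * 0 + 0) with 0 in E by ring. replace (-1 * PI + 0) with (-PI) in E by ring.
    rewrite <- opp_RInt_swap, <- E by (apply ex_RInt_cont; auto).
    rewrite (RInt_ext _ (fun y => scal (-1) (G y))).
    assert (E3 := RInt_scal (V:=R_CompleteNormedModule) G 0 PI (-1) ltac:(apply ex_RInt_cont; auto)).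
    unfold opp, scal in *; simpl in *; unfold mult in *; simpl in *. rewrite E3. ring.
    intros; replace (-1 * x + 0) with (- x) by ring. rewrite He; auto. }
  rewrite H0. unfold plus; simpl; ring.
Qed.

Definition Gi (a b : nat -> R) x i := b (S i) * cos (INR (S i) * x) - a (S i) * sin (INR (S i) * x).

Lemma tp_diff a b n x y :
  tp a b n (x + y) - tp a b n (x - y) = fsum (fun i => 2 * sin (INR (S i) * y) * Gi a b x i) n.
Proof.
  unfold tp, Gi. induction n; cbn [fsum]. ring.
  replace (INR (S n) * (x + y)) with (INR (S n) * x + INR (S n) * y) by ring.
  replace (INR (S n) * (x - y)) with (INR (S n) * x - INR (S n) * y) by ring.
  rewrite cos_plus, cos_minus, sin_plus, sin_minus. lra.
Qed.

Lemma tpd_Gi a b n x : tpd a b n x = fsum (fun i => INR (S i) * Gi a b x i) n.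
Proof. reflexivity. Qed.

Lemma riesz_id N a b x : (1 <= N)%nat ->
  fsum (fun k => (-1)^k / sin (hk N k)^2 * (tp a b N (x + xk N k) - tp a b N (x - xk N k))) N
  = 4 * Bs N 0 * tpd a b N x.
Proof.
  intros HN.
  rewrite (fsum_ext _ (fun k => fsum (fun i => (-1)^k / sin (hk N k)^2 * (2 * sin (INR (S i) * xk N k) * Gi a b x i)) N)).
  rewrite fsum_swap. rewrite tpd_Gi, <- fsum_scal. apply fsum_ext. intros i Hi.
  rewrite (fsum_ext _ (fun k => (2 * Gi a b x i) * ((-1)^k * sin (INR (S i) * xk N k) / sin (hk N k)^2))).
  rewrite fsum_scal. fold (As N (S i)). rewrite As_lin by lia. ring.
  intros k Hk. assert (Hs := sk_pos N HN k Hk). field. lra.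
  intros k Hk. rewrite tp_diff. rewrite fsum_scal. auto.
Qed.

Lemma tp_abs_cont a b n c x : continuous (fun y => Rabs (tp a b n (y + c))) x.
Proof.
  apply continuous_Rabs_comp. apply (continuous_comp (fun y => y + c) (tp a b n)).
  apply (continuous_plus (fun y => y) (fun _ => c)). apply continuous_id. apply continuous_const.
  apply tp_cont.
Qed.

Lemma bern_full a b N : 
  RInt (fun x => Rabs (tpd a b N x)) (-PI) PI <= INR N * RInt (fun x => Rabs (tp a b N x)) (-PI) PI.
Proof.
  destruct N as [|M].
  { unfold tpd; simpl. rewrite (RInt_ext _ (fun _ => 0)). rewrite RInt_const. unfold scal; simpl; unfold mult; simpl. lra.
    intros; rewrite Rabs_R0; auto. }
  set (N := S M). assert (HN : (1 <= N)%nat) by (unfold N; lia).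
  assert (HB := Bs0_pos N HN).
  set (c := fun k => / (4 * Bs N 0 * sin (hk N k)^2)).
  set (h := fun k x => c k * (Rabs (tp a b N (x + xk N k)) + Rabs (tp a b N (x + - xk N k))) ).
  assert (Hc : forall k x, continuous (h k) x).
  { intros k x. unfold h. apply (continuous_mult (K:=R_AbsRing) (fun _ => c k) (fun y => Rabs (tp a b N (y + xk N k)) + Rabs (tp a b N (y + - xk N k)))). apply continuous_const.
    apply (continuous_plus (fun y => Rabs (tp a b N (y + xk N k))) (fun y => Rabs (tp a b N (y + - xk N k)))); apply tp_abs_cont. }
  apply Rle_trans with (RInt (fun y => fsum (fun k => h k y) N) (-PI) PI).
  { apply RInt_le. assert (PI_RGT_0 := PI_RGT_0); lra.
    apply ex_RInt_cont. intros; apply continuous_Rabs_comp, tpd_cont.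
    apply ex_RInt_cont. intros; apply continuous_fsum; auto.
    intros x _.
    assert (E := riesz_id N a b x HN).
    replace (tpd a b N x) with (/ (4 * Bs N 0) * fsum (fun k => (-1)^k / sin (hk N k)^2 * (tp a b N (x + xk N k) - tp a b N (x - xk N k))) N)
      by (rewrite E; field; lra).
    rewrite <- fsum_scal. eapply Rle_trans; [apply fsum_abs|]. apply fsum_le. intros k Hk.
    assert (Hs := sk_pos N HN k Hk). unfold h, c.
    assert (0 < / (4 * Bs N 0 * sin (hk N k) ^ 2)) by (apply Rinv_0_lt_compat; apply Rmult_lt_0_compat; [lra| apply pow_lt; lra]).
    replace (/ (4 * Bs N 0) * ((-1) ^ k / sin (hk N k) ^ 2 * (tp a b N (x + xk N k) - tp a b N (x - xk N k))))
      with (((-1)^k) * (/ (4 * Bs N 0 * sin (hk N k) ^ 2) * (tp a b N (x + xk N k) - tp a b N (x - xk N k)))) by (field; lra).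
    rewrite Rabs_mult, pow_1_abs, Rmult_1_l, Rabs_mult, (Rabs_right (/ _)) by lra.
    apply Rmult_le_compat_l. lra. unfold Rminus. eapply Rle_trans; [apply Rabs_triang|]. rewrite Rabs_Ropp. lra. }
  rewrite RInt_fsum by auto.
  set (I := RInt (fun x => Rabs (tp a b N x)) (-PI) PI).
  assert (Hper : forall c0, RInt (fun x => Rabs (tp a b N (x + c0))) (-PI) PI = I).
  { intros c0. apply (RInt_shift_period (fun x => Rabs (tp a b N x))). intros; apply continuous_Rabs_comp, tp_cont.
    intros; rewrite tp_period; auto. }
  rewrite (fsum_ext _ (fun k => (2 * I / (4 * Bs N 0)) * / sin (hk N k)^2)).
  rewrite fsum_scal. fold (Ssum N). rewrite (Bs0_eq N HN).
  assert (HS := Ssum_pos N HN). assert (0 < INR N) by (apply lt_0_INR; lia). right. field. lra.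
  intros k Hk. unfold h. 
  rewrite (RInt_scal (fun x => Rabs (tp a b N (x + xk N k)) + Rabs (tp a b N (x + - xk N k)))).
  rewrite (RInt_plus (fun x => Rabs (tp a b N (x + xk N k))) (fun x => Rabs (tp a b N (x + - xk N k)))).
  rewrite !Hper. unfold c, scal, plus; simpl; unfold mult; simpl.
  assert (Hs := sk_pos N HN k Hk). field. lra.
  apply ex_RInt_cont; intros; apply tp_abs_cont.
  apply ex_RInt_cont; intros; apply tp_abs_cont.
  apply ex_RInt_cont; intros.
  apply (continuous_plus (fun y => Rabs (tp a b N (y + xk N k))) (fun y => Rabs (tp a b N (y + - xk N k)))); apply tp_abs_cont.
Qed.

Lemma tp_abs_cont0 a b n x : continuous (fun y => Rabs (tp a b n y)) x.
Proof. apply continuous_Rabs_comp, tp_cont. Qed.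
Lemma tpd_abs_cont0 a b n x : continuous (fun y => Rabs (tpd a b n y)) x.
Proof. apply continuous_Rabs_comp, tpd_cont. Qed.

Lemma deriv_neg a b n x : is_derive (fun t => tp a b n (- t)) x (- tpd a b n (- x)).
Proof.
  apply (is_derive_ext (fun t => tp a b n ((fun s => - s) t))). auto.
  replace (- tpd a b n (- x)) with (scal (-1) (tpd a b n (- x))) by (unfold scal; simpl; unfold mult; simpl; ring).
  apply (is_derive_comp (tp a b n) (fun s => - s)). apply tp_derive.
  auto_derive; auto. 
Qed.

Lemma parity a b n : (forall t, tp a b n (- t) = tp a b n t) \/ (forall t, tp a b n (- t) = - tp a b n t) ->
  forall x, Rabs (tpd a b n (- x)) = Rabs (tpd a b n x).
Proof.
  intros [He|Ho] x.
  - assert (D := deriv_neg a b n x).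
    assert (D2 : is_derive (tp a b n) x (- tpd a b n (- x))) by (eapply is_derive_ext; [|exact D]; intros; simpl; auto).
    apply is_derive_unique in D2. rewrite (is_derive_unique _ _ _ (tp_derive a b n x)) in D2.
    rewrite D2, Rabs_Ropp. auto.
  - assert (D := deriv_neg a b n x).
    assert (D2 : is_derive (fun t => - tp a b n t) x (- tpd a b n (- x))) by (eapply is_derive_ext; [|exact D]; intros; simpl; auto).
    assert (D3 : is_derive (fun t => - tp a b n t) x (- tpd a b n x)) by (apply (is_derive_opp (tp a b n)); apply tp_derive).
    apply is_derive_unique in D2. apply is_derive_unique in D3. rewrite D2 in D3.
    replace (tpd a b n (-x)) with (- - tpd a b n (-x)) by ring. rewrite D3. rewrite !Rabs_Ropp. auto.
Qed.

Lemma bern_half a b n : (forall t, tp a b n (- t) = tp a b n t) \/ (forall t, tp a b n (- t) = - tp a b n t) ->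
  RInt (fun x => Rabs (tpd a b n x)) 0 PI <= INR n * RInt (fun x => Rabs (tp a b n x)) 0 PI.
Proof.
  intros Hp. assert (H := bern_full a b n).
  rewrite (RInt_even (fun x => Rabs (tpd a b n x))) in H.
  rewrite (RInt_even (fun x => Rabs (tp a b n x))) in H. lra.
  apply tp_abs_cont0. intros x. destruct Hp as [He|Ho]; rewrite ?He, ?Ho, ?Rabs_Ropp; auto.
  apply tpd_abs_cont0. apply parity; auto.
Qed.

Lemma interval_bound a b n l r : l <= r ->
  (Rabs (tp a b n r) - RInt (fun x => Rabs (tpd a b n x)) l r) * (r - l)
  <= RInt (fun x => Rabs (tp a b n x)) l r.
Proof.
  intros Hlr.
  assert (Hex : forall u v, ex_RInt (fun x => Rabs (tpd a b n x)) u v) by (intros; apply ex_RInt_cont, tpd_abs_cont0).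
  replace ((Rabs (tp a b n r) - RInt (fun x => Rabs (tpd a b n x)) l r) * (r - l))
    with (RInt (fun _ => Rabs (tp a b n r) - RInt (fun x => Rabs (tpd a b n x)) l r) l r)
    by (rewrite RInt_const; unfold scal; simpl; unfold mult; simpl; ring).
  apply RInt_le; auto. apply ex_RInt_cont; intros; apply continuous_const.
  apply ex_RInt_cont, tp_abs_cont0.
  intros t Ht.
  assert (E : RInt (tpd a b n) t r = tp a b n r - tp a b n t).
  { apply is_RInt_unique. apply (is_RInt_derive (tp a b n) (tpd a b n)).
    intros; apply tp_derive. intros; apply tpd_cont. }
  assert (E2 : Rabs (RInt (tpd a b n) t r) <= RInt (fun x => Rabs (tpd a b n x)) t r).
  { apply abs_RInt_le. lra. apply ex_RInt_cont, tpd_cont. }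
  assert (E3 : 0 <= RInt (fun x => Rabs (tpd a b n x)) l t).
  { apply RInt_ge_0. lra. auto. intros; apply Rabs_pos. }
  assert (E4 := RInt_Chasles (fun x => Rabs (tpd a b n x)) l t r (Hex _ _) (Hex _ _)).
  unfold plus in E4; simpl in E4.
  rewrite E in E2.
  assert (Rabs (tp a b n r) <= Rabs (tp a b n t) + Rabs (tp a b n r - tp a b n t)).
  { replace (tp a b n r) with (tp a b n t + (tp a b n r - tp a b n t)) at 1 by ring. apply Rabs_triang. }
  lra.
Qed.

Lemma RInt_telescope (F : R -> R) (ang : nat -> R) m : (forall x, continuous F x) ->
  fsum (fun i => RInt F (ang i) (ang (S i))) m = RInt F (ang O) (ang m).
Proof.
  intros H. induction m; simpl. rewrite RInt_point. reflexivity.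
  rewrite IHm. assert (E := RInt_Chasles F (ang O) (ang m) (ang (S m))).
  unfold plus in E; simpl in E. apply E; apply ex_RInt_cont; auto.
Qed.

Lemma nw_pos w n : (1 <= n)%nat -> 0 < cheb_nw w n.
Proof. intros. assert (0 < INR n) by (apply lt_0_INR; lia). destruct w; simpl; lra. Qed.

Lemma angle_step w n i : (1 <= n)%nat -> (i < n)%nat ->
  0 <= cheb_angle w n (S i) - cheb_angle w n i <= PI / cheb_nw w n.
Proof.
  intros Hn Hi. assert (Hp := PI_RGT_0). assert (H0 : 0 < INR n) by (apply lt_0_INR; lia).
  assert (Hq : 0 < PI / cheb_nw w n) by (apply Rdiv_lt_0_compat; auto; apply nw_pos; auto).
  assert (exists r, (r = 1 \/ r = /2) /\ cheb_angle w n (S i) - cheb_angle w n i = r * (PI / cheb_nw w n)) as [r [Hr E]].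
  { destruct i as [|j]; destruct w; unfold cheb_angle, cheb_nw; rewrite ?S_INR; simpl.
    - exists (/2). split; auto. field. lra.
    - exists 1. split; auto. field. lra.
    - exists (/2). split; auto. field. lra.
    - exists 1. split; auto. field. lra.
    - exists 1. split; auto. rewrite ?S_INR. field. lra.
    - exists 1. split; auto. rewrite ?S_INR. field. lra.
    - exists 1. split; auto. rewrite ?S_INR. field. lra.
    - exists 1. split; auto. rewrite ?S_INR. field. lra. }
  rewrite E. destruct Hr; subst; split; nra.
Qed.

Lemma angle_last w n : (1 <= n)%nat -> cheb_angle w n n <= PI.
Proof.
  intros Hn. assert (Hp := PI_RGT_0). assert (H0 : 0 < INR n) by (apply lt_0_INR; lia).
  destruct n as [|m]. lia. set (x := INR (S m)) in *.
  destruct w; unfold cheb_angle; fold x.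
  - assert (PI - (2 * x - 1) * PI / (2 * x) = PI / (2 * x)) by (field; lra).
    assert (0 < PI / (2*x)) by (apply Rdiv_lt_0_compat; lra). lra.
  - assert (PI - x * PI / (x + 1) = PI / (x + 1)) by (field; lra).
    assert (0 < PI / (x + 1)) by (apply Rdiv_lt_0_compat; lra). lra.
  - assert (PI - (2 * x - 1) * PI / (2 * x + 1) = 2 * PI / (2 * x + 1)) by (field; lra).
    assert (0 < 2 * PI / (2 * x + 1)) by (apply Rdiv_lt_0_compat; lra). lra.
  - assert (PI - 2 * x * PI / (2 * x + 1) = PI / (2 * x + 1)) by (field; lra).
    assert (0 < PI / (2 * x + 1)) by (apply Rdiv_lt_0_compat; lra). lra.
Qed.

Theorem lemma6p2 (w : cheb_weight) (n nu : nat) (Q : R -> R) :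
  (1 <= n)%nat ->
  is_trig_poly_deg_le nu Q ->
  (is_even_fun Q \/ is_odd_fun Q) ->
  sum_n_m (fun k => Rabs (Q (cheb_angle w n k)) * cheb_dangle w n k) 1 n
  <= (1 + 2 * PI * INR nu / cheb_nw w n) * RInt (fun tau => Rabs (Q tau)) 0 PI.
Proof.
  intros Hn [a [b HQ]] Hpar.
  assert (HQ' : forall t, Q t = tp a b nu t) by (intros; rewrite HQ, trig_tp; auto).
  assert (Hp : (forall t, tp a b nu (- t) = tp a b nu t) \/ (forall t, tp a b nu (- t) = - tp a b nu t)).
  { destruct Hpar as [He|Ho]; [left|right]; intros t; rewrite <- !HQ'; auto. }
  rewrite (RInt_ext _ (fun tau => Rabs (tp a b nu tau))) by (intros; rewrite HQ'; auto).
  rewrite sum_n_m_fsum.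
  set (ang := cheb_angle w n).
  set (IQ := RInt (fun tau => Rabs (tp a b nu tau)) 0 PI).
  set (ID := RInt (fun tau => Rabs (tpd a b nu tau)) 0 PI).
  set (c := PI / cheb_nw w n).
  assert (Hc : 0 < c) by (apply Rdiv_lt_0_compat; [apply PI_RGT_0| apply nw_pos; auto]).
  assert (Hstep : forall i, (i < n)%nat ->
    Rabs (Q (ang (S i))) * cheb_dangle w n (S i) <=
      RInt (fun x => Rabs (tp a b nu x)) (ang i) (ang (S i)) + c * RInt (fun x => Rabs (tpd a b nu x)) (ang i) (ang (S i))).
  { intros i Hi. unfold cheb_dangle. replace (S i - 1)%nat with i by lia. fold ang.
    rewrite HQ'. destruct (angle_step w n i Hn Hi) as [H1 H2]. fold ang c in H1, H2.
    assert (B := interval_bound a b nu (ang i) (ang (S i)) ltac:(lra)).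
    assert (V : 0 <= RInt (fun x => Rabs (tpd a b nu x)) (ang i) (ang (S i))).
    { apply RInt_ge_0. lra. apply ex_RInt_cont, tpd_abs_cont0. intros; apply Rabs_pos. }
    nra. }
  eapply Rle_trans. apply (fsum_le _ _ n Hstep).
  rewrite fsum_plus, fsum_scal, !RInt_telescope by (intros; first [apply tp_abs_cont0 | apply tpd_abs_cont0]).
  assert (A0 : ang O = 0) by reflexivity. rewrite A0.
  assert (AL := angle_last w n Hn). fold ang in AL.
  assert (A1 : 0 <= ang n).
  { assert (forall m, (m <= n)%nat -> 0 <= ang m).
    { induction m; intros Hm. lra. destruct (angle_step w n m Hn ltac:(lia)) as [H1 H2]. fold ang in H1.
      specialize (IHm ltac:(lia)). lra. }
    apply H; lia. }
  assert (Hsplit : forall F, (forall x, continuous F x) -> (forall x, 0 <= F x) -> RInt F 0 (ang n) <= RInt F 0 PI).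
  { intros F HF HF0. rewrite <- (RInt_Chasles F 0 (ang n) PI) by (apply ex_RInt_cont; auto).
    assert (0 <= RInt F (ang n) PI) by (apply RInt_ge_0; auto; apply ex_RInt_cont; auto).
    unfold plus; simpl; lra. }
  assert (S1 := Hsplit _ (tp_abs_cont0 a b nu) (fun x => Rabs_pos _)).
  assert (S2 := Hsplit _ (tpd_abs_cont0 a b nu) (fun x => Rabs_pos _)).
  fold IQ in S1. fold ID in S2.
  assert (BH := bern_half a b nu Hp). fold IQ ID in BH.
  assert (HIQ : 0 <= IQ) by (apply RInt_ge_0; [assert (H := PI_RGT_0); lra| apply ex_RInt_cont, tp_abs_cont0| intros; apply Rabs_pos]).
  assert (Hnu : 0 <= INR nu) by apply pos_INR.
  replace (2 * PI * INR nu / cheb_nw w n) with (2 * INR nu * c) by (unfold c; field; apply Rgt_not_eq, nw_pos; auto).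
  assert (c * ID <= c * (INR nu * IQ)) by (apply Rmult_le_compat_l; lra).
  assert (0 <= c * (INR nu * IQ)) by (apply Rmult_le_pos; [lra| apply Rmult_le_pos; lra]).
  assert (S1' : RInt (fun x : R => Rabs (tp a b nu x)) 0 (ang n) <= IQ) by exact S1.
  assert (S2' : RInt (fun x : R => Rabs (tpd a b nu x)) 0 (ang n) <= ID) by exact S2.
  assert (c * RInt (fun x : R => Rabs (tpd a b nu x)) 0 (ang n) <= c * ID) by (apply Rmult_le_compat_l; lra).
  nra.
Qed.
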